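(* For all $x\in[0,1/4]$ we have $c_{3,3}(x) = 1/4 - x$.
   Context: For a graph $G$, $k_3(G)$ is the number of triangles in $G$ and $\overline{G}$ the complement. A pair $(x,y)\in[0,1]^2$ is realised by a sequence of graphs $(G_n)_{n\in\mathbb{N}}$ with $G_n$ of order $n$ if $\lim_{n\to\infty} k_3(\overline{G_n})/\binom{n}{3} = x$ and $\lim_{n\to\infty} k_3(G_n)/\binom{n}{3} = y$. $\Omega_{3,3}$ is the set of all realised pairs and $c_{3,3}(x) = \inf\{y : (x,y)\in\Omega_{3,3}\}$. *)

(* Defs.v *)
From HB Require Import structures.
From mathcomp Require Import all_boot all_order all_algebra.
From mathcomp Require Import all_classical all_reals all_analysis.
Set Implicit Arguments. Unset Strict Implicit. Unset Printing Implicit Defensive.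
Import Order.TTheory GRing.Theory Num.Theory.
Import numFieldNormedType.Exports.
Local Open Scope ring_scope.
Local Open Scope classical_set_scope.

Definition simple_graph (n : nat) (e : rel 'I_n) : Prop :=
  (forall x y, e x y = e y x) /\ (forall x, ~~ e x x).

Definition gcompl (n : nat) (e : rel 'I_n) : rel 'I_n :=
  fun x y => (x != y) && ~~ e x y.

Definition k3 (n : nat) (e : rel 'I_n) : nat :=
  #|[set A : {set 'I_n} | (#|A| == 3)%N &&
      [forall x in A, forall y in A, (x != y) ==> e x y]]|.

Definition k3_dens (R : realType) (n : nat) (e : rel 'I_n) : R :=
  (k3 e)%:R / ('C(n, 3))%:R.

Definition realised (R : realType) (x y : R) : Prop :=
  exists G : forall n : nat, rel 'I_n,
    (forall n, simple_graph (G n)) /\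
    ((fun n : nat => k3_dens R (gcompl (G n))) @ \oo --> x) /\
    ((fun n : nat => k3_dens R (G n)) @ \oo --> y).

Definition Omega33 (R : realType) : set (R * R) :=
  [set p | realised p.1 p.2].

Definition c33 (R : realType) (x : R) : R :=
  inf [set y | @Omega33 R (x, y)].

(* Main.v *)
Require Import Defs.
From HB Require Import structures.
From mathcomp Require Import all_boot all_order all_algebra.
From mathcomp Require Import all_classical all_reals all_analysis.
From mathcomp Require Import ring lra zify.
Import Order.TTheory GRing.Theory Num.Theory.
Import numFieldNormedType.Exports.

Module Comb.
From mathcomp Require Import ssrnat seq fintype finset bigop binomial.
Set Implicit Arguments. Unset Strict Implicit. Unset Printing Implicit Defensive.

Definition k3f (n : nat) (e : rel 'I_n) : nat :=
  #|[set A : {set 'I_n} | (#|A| == 3)%N &&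
      [forall x in A, forall y in A, (x != y) ==> e x y]]|.

Lemma k3E (n : nat) (e : rel 'I_n) : k3 e = k3f e.
Proof.
rewrite /k3 /k3f; apply: eq_card => A; rewrite inE /=.
by apply/idP/idP => [/asboolP //|h]; apply/asboolP.
Qed.

Lemma cards3P (T : finType) (A : {set T}) : #|A| == 3 ->
  exists x y z, [/\ x != y, y != z & x != z] /\ A = [set x; y; z].
Proof.
have [[|x [|y [|z []]]]//=] := cards_eqP; rewrite !inE !andbT negb_or => /andP[/andP [xy xz] yz] _.
exists x, y, z; split; first by [].
by apply/setP => w; rewrite !inE orbA.
Qed.

Lemma in3 (T : finType) (a b c x : T) : x \in [set a; b; c] -> [\/ x = a, x = b | x = c].
Proof. by rewrite !inE => /orP [/orP [] | ] /eqP ->; [constructor 1|constructor 2|constructor 3]. Qed.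

Lemma cards3 (T : finType) (a b c : T) : a != b -> b != c -> a != c -> #|[set a; b; c]| = 3.
Proof.
move=> ab bc ac; have -> : [set a; b; c] = a |: (b |: [set c]) by apply/setP => z; rewrite !inE orbA.
by rewrite !cardsU1 !inE cards1 negb_or ab bc ac.
Qed.

Section G.
Variable n : nat.
Implicit Types e : rel 'I_n.

Definition tri e (A : {set 'I_n}) := [forall x in A, forall y in A, (x != y) ==> e x y].
Definition bichrom e v (A : {set 'I_n}) :=
  [exists a in A, exists b in A, e v a && ~~ e v b && (b != v)].

Lemma triE e a b c : (forall x y, e x y = e y x) -> a != b -> b != c -> a != c ->
  tri e [set a; b; c] = e a b && e b c && e a c.
Proof.
move=> sym ab bc ac; apply/idP/idP.
  move=> /forallP H.
  have P x y : x \in [set a; b; c] -> y \in [set a; b; c] -> x != y -> e x y.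
    by move=> xA yA xy; move: (H x); rewrite xA /= => /forallP /(_ y); rewrite yA xy.
  by rewrite !P ?inE ?eqxx ?orbT.
move=> /andP [/andP [eab ebc] eac]; apply/forallP => x; apply/implyP => xA.
apply/forallP => y; apply/implyP => yA; apply/implyP => xy.
move: xA yA xy => /in3 [] -> /in3 [] ->;
  rewrite ?eqxx // => _; by rewrite // sym.
Qed.

Lemma bichromE e v p q : simple_graph e -> v != p -> v != q -> p != q ->
  bichrom e v [set v; p; q] = (e v p != e v q).
Proof.
move=> [sym irr] vp vq pq; apply/idP/idP.
  move=> /existsP [a /andP [aA /existsP [b /andP [bA /andP [/andP [eva nevb] bv]]]]].
  move: aA bA bv eva nevb => /in3 [] -> /in3 [] -> bv;
  move: bv (irr v); case: (e v v); case: (e v p); case: (e v q); rewrite ?eqxx //=.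
rewrite /bichrom; case E1: (e v p); case E2: (e v q) => //= _; apply/existsP.
  exists p; rewrite !inE eqxx orbT /=.
  by apply/existsP; exists q; rewrite !inE eqxx !orbT E1 E2 eq_sym vq ?orbT.
exists q; rewrite !inE eqxx !orbT /=.
apply/existsP; exists p; rewrite !inE eqxx !orbT E1 E2 /=; rewrite eq_sym; exact vp.
Qed.

Definition deg e v := #|[set a | e v a]|.

Lemma card_B e v : simple_graph e ->
  #|[set A : {set 'I_n} | (#|A| == 3) && (v \in A) && bichrom e v A]| = deg e v * (n.-1 - deg e v).
Proof.
move=> [sym irr].
set N := [set a | e v a]; set M := [set b | ~~ e v b & b != v].
have cM : #|M| = n.-1 - deg e v.
  have -> : M = ~: N :\ v by apply/setP => z; rewrite !inE andbC.
  have H1 := cardsC N; have H2 := cardsD1 v (~: N).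
  have Hv : v \in ~: N by rewrite !inE irr.
  rewrite Hv in H2; rewrite /deg -/N.
  rewrite (card_ord n) in H1; move: H1 H2; move: #|N| #|~: N| #|~: N :\ v| => a b c; simpl; lia.
have fact1 a b : a \in N -> b \in M -> [/\ v != a, v != b & a != b].
  rewrite !inE => eva /andP [nevb bv]; split; last 1 first.
  - by apply/eqP => ab; move: nevb; rewrite -ab eva.
  - by apply/eqP => va; move: eva; rewrite -va (negbTE (irr v)).
  - by rewrite eq_sym.
have -> : [set A : {set 'I_n} | (#|A| == 3) && (v \in A) && bichrom e v A] =
    (fun p => [set v; p.1; p.2]) @: setX N M.
  apply/setP => A; rewrite inE; apply/idP/imsetP.
    case/andP => [/andP [c3 vA] /existsP[a /andP[aA /existsP[b /andP[bA /andP[/andP[eva nevb] bv]]]]]].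
    have aN : a \in N by rewrite inE.
    have bM : b \in M by rewrite !inE nevb bv.
    exists (a, b); first by rewrite inE aN bM.
    have [va vb ab] := fact1 a b aN bM.
    apply/eqP; rewrite eq_sym eqEcard cards3 // (eqP c3) leqnn andbT.
    by apply/subsetP => x /in3 [] ->.
  case=> [[a b]]; rewrite inE /= => /andP [aN bM] ->.
  have [va vb ab] := fact1 a b aN bM.
  rewrite cards3 // !inE eqxx /= bichromE //.
  by move: aN bM; rewrite !inE eqxx /= => -> /andP [/negbTE -> _].
rewrite card_in_imset ?cardsX ?cM //.
move=> [a b] [a' b']; rewrite !in_setX => /andP [aN bM] /andP [aN' bM'] E.
have [va vb ab] := fact1 a b aN bM.
have [va' vb' ab'] := fact1 a' b' aN' bM'.
have /in3 Ha : a \in [set v; a'; b'] by rewrite -E !inE eqxx orbT.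
have /in3 Hb : b \in [set v; a'; b'] by rewrite -E !inE eqxx orbT.
move: aN bM aN' bM'; rewrite !inE.
move=> eva /andP [nevb bv] eva' /andP [nevb' bv'].
case: Ha => ea; case: Hb => eb; subst; rewrite ?eqxx in va vb ab va' vb' ab' *;
  rewrite ?eva ?eva' in nevb nevb' => //.
Qed.

Lemma per_triple e (A : {set 'I_n}) : simple_graph e -> #|A| == 3 ->
  \sum_(v in A) (bichrom e v A : nat) + (tri e A).*2 + (tri (gcompl e) A).*2 = 2.
Proof.
move=> [sym irr] /cards3P [a [b [c [[ab bc ac] ->]]]].
have E1 : [set a; b; c] = a |: (b |: [set c]) by apply/setP => z; rewrite !inE orbA.
have E2 : [set a; b; c] = [set b; a; c] by apply/setP => z; rewrite !inE (orbC (z == a)).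
have E3 : [set a; b; c] = [set c; a; b] by apply/setP => z; rewrite !inE orbC orbA.
have symc : forall x y, gcompl e x y = gcompl e y x by move=> x y; rewrite /gcompl eq_sym sym.
rewrite {1}E1 big_setU1 /= ?big_setU1 /= ?big_set1; last 2 first.
- by rewrite !inE.
- by rewrite !inE negb_or ab ac.
have B2 : bichrom e b [set a; b; c] = (e b a != e b c).
  by rewrite E2 bichromE // eq_sym.
have B3 : bichrom e c [set a; b; c] = (e c a != e c b).
  by rewrite E3 bichromE // eq_sym.
rewrite B2 B3 bichromE ?triE //.
rewrite /gcompl ab bc ac (sym b a) (sym c a) (sym c b) /=.
by case: (e a b); case: (e b c); case: (e a c).
Qed.

Lemma goodman e : simple_graph e ->
  (k3f e + k3f (gcompl e)).*2 + \sum_(v : 'I_n) deg e v * (n.-1 - deg e v) = 'C(n, 3).*2.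
Proof.
move=> se.
set T := [set A : {set 'I_n} | #|A| == 3].
have HT : #|T| = 'C(n,3) by rewrite card_draws card_ord.
have K e' : k3f e' = \sum_(A in T) (tri e' A : nat).
  rewrite /k3f -sum1dep_card big_mkcond /= [RHS]big_mkcond /=.
  by apply: eq_bigr => A _; rewrite inE /tri; case: (_ == 3); case: [forall x in A, _].
have S : \sum_(A in T) \sum_(v in A) (bichrom e v A : nat) = \sum_v deg e v * (n.-1 - deg e v).
  under eq_bigr do rewrite big_mkcond /=.
  rewrite big_mkcond /=.
  rewrite (eq_bigr (fun A => \sum_v (if A \in T then (if v \in A then (bichrom e v A : nat) else 0) else 0))); last first.
    by move=> B _; case: (B \in T) => //; rewrite big1.
  rewrite exchange_big /=; apply: eq_bigr => v _.
  rewrite -card_B // -sum1dep_card [RHS]big_mkcond /=.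
  by apply: eq_bigr => A _; rewrite inE; case: (_ == 3); case: (v \in A); case: (bichrom e v A).
have D (F : {set 'I_n} -> nat) : \sum_(A in T) (F A).*2 = (\sum_(A in T) F A).*2.
  by rewrite -muln2 big_distrl; apply: eq_bigr => A _; rewrite /= muln2.
have PT : forall A, A \in T -> \sum_(v in A) (bichrom e v A : nat) + (tri e A).*2 + (tri (gcompl e) A).*2 = 2.
  by move=> A; rewrite inE; exact: per_triple se.
have H := eq_bigr (fun A => 2) PT (I := _) (r := index_enum _) (op := addn) (idx := 0).
rewrite !big_split /= !D -!K S sum_nat_const HT in H. move: H. set s := \sum_(v < n) _. rewrite /=. lia.
Qed.

Lemma triP e A x y : tri e A -> x \in A -> y \in A -> x != y -> e x y.
Proof. by move=> /forallP /(_ x); move=> H xA; move: H; rewrite xA /= => /forallP /(_ y) H yA; move: H; rewrite yA /= => /implyP. Qed.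

Lemma k3_side e (side : 'I_n -> bool) :
  (forall x y, x != y -> side x = side y -> ~~ e x y) -> k3f e = 0.
Proof.
move=> H; apply/eqP; rewrite cards_eq0; apply/eqP/setP => A; rewrite !inE.
apply/negP => /andP [/cards3P [a [b [c [[ab bc ac] ->]]]] tr].
have tab := triP tr (x := a) (y := b); have tbc := triP tr (x := b) (y := c).
have tac := triP tr (x := a) (y := c).
rewrite !inE !eqxx ?orbT /= in tab tbc tac.
move: (H a b ab) (H b c bc) (H a c ac) (tab isT isT ab) (tbc isT isT bc) (tac isT isT ac).
case: (side a); case: (side b); case: (side c) => h1 h2 h3 t1 t2 t3;
  first [ by move: (h1 erefl); rewrite t1 | by move: (h2 erefl); rewrite t2
        | by move: (h3 erefl); rewrite t3 ].
Qed.

Lemma card_meet (S : {set 'I_n}) :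
  #|[set A : {set 'I_n} | (#|A| == 3) && (A :&: S != set0)]| <= #|S| * (n * n).
Proof.
have -> : n * n = #|[set: 'I_n * 'I_n]| by rewrite cardsT card_prod card_ord.
rewrite -cardsX.
apply: leq_trans (leq_imset_card (fun t => [set t.1; t.2.1; t.2.2]) _).
apply/subset_leq_card/subsetP => A; rewrite inE => /andP [/cards3P [a [b [c [[ab bc ac] ->]]]]].
case/set0Pn => s; rewrite inE => /andP [/in3 [] -> sS]; apply/imsetP.
- by exists (a, (b, c)); rewrite // !inE sS.
- exists (b, (a, c)); first by rewrite !inE sS.
  by apply/setP => z; rewrite !inE /= (orbC (z == a)).
- exists (c, (a, b)); first by rewrite !inE sS.
  by apply/setP => z; rewrite !inE /= orbC orbA.
Qed.

Lemma k3_local e e' (S : {set 'I_n}) :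
  (forall x y, x \notin S -> y \notin S -> e x y = e' x y) ->
  k3f e <= k3f e' + #|S| * (n * n).
Proof.
move=> H.
set X' := [set A : {set 'I_n} | (#|A| == 3) && tri e' A].
set Y := [set A : {set 'I_n} | (#|A| == 3) && (A :&: S != set0)].
have h2 := (leq_card_setU X' Y).1.
have h3 := card_meet S.
have -> : k3f e' = #|X'| by [].
suff h1 : k3f e <= #|X' :|: Y|.
  by apply: (leq_trans h1); apply: (leq_trans h2); rewrite leq_add2l.
apply/subset_leq_card/subsetP => A; rewrite !inE => /andP [c3 tr].
rewrite c3 /=; case: (boolP (A :&: S == set0)) => [/eqP AS|]; last by rewrite orbT.
apply/orP; left; apply/forallP => x; apply/implyP => xA; apply/forallP => y.
apply/implyP => yA; apply/implyP => xy.
have nS z : z \in A -> z \notin S.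
  by move=> zA; apply/negP => zS; move: AS => /setP /(_ z); rewrite !inE zA zS.
by rewrite -H ?nS //; apply: (triP tr).
Qed.
End G.

Definition Hc (r p q : nat) := (p != q) && (p < r) && (q < r).
Definition E (m r i j : nat) : bool :=
  (i < m.*2) && (j < m.*2) && (i != j) &&
  (if odd i == odd j then Hc r i./2 j./2 else ~~ Hc r i./2 j./2).
Definition Gc (n r : nat) : rel 'I_n := fun x y => E n./2 r x y.
Arguments Gc : clear implicits.

Lemma Gc_simple (n r : nat) : simple_graph (Gc n r).
Proof.
split=> [x y|x]; last by rewrite /Gc /E eqxx !andbF.
rewrite /Gc /E (eq_sym (val x)) (eq_sym (odd y)) /Hc (eq_sym (val x)./2).
case: (val x < _); case: (val y < _) => //=.
by rewrite -!andbA (andbC (x./2 < r)).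
Qed.

Lemma pair_val m r p q (b : bool) : p < m -> q < m ->
  E m r (b + p.*2) q.*2 + E m r (b + p.*2) q.*2.+1 = 1.
Proof.
move=> pm qm.
have h1 : (q.*2.+1)./2 = q by rewrite -[q.*2.+1]/(true + q.*2) half_bit_double.
have h2 : (b + p.*2 < m.*2) by case: b; lia.
have h3 : (q.*2 < m.*2) by lia.
have h4 : (q.*2.+1 < m.*2) by lia.
rewrite /E h1 half_bit_double doubleK h2 h3 h4 /= oddD odd_double addbF odd_double.
clear h2; case: (eqVneq p q) => [->|pq]; case: b => /=.
- by rewrite /Hc eqxx /=; lia.
- by rewrite /Hc eqxx /=; lia.
- have -> : (1 + p.*2 != q.*2) by lia.
  have -> : (1 + p.*2 != q.*2.+1) = (p != q) by apply/idP/idP; lia.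
  rewrite pq /=; case: (Hc r p q) => //.
- have -> : (p.*2 != q.*2) = (p != q) by apply/idP/idP; lia.
  have -> : (p.*2 != q.*2.+1) by lia.
  rewrite pq /=; case: (Hc r p q) => //.
Qed.

Lemma sum_pairs (F : nat -> nat) m :
  \sum_(0 <= j < m.*2) F j = \sum_(0 <= q < m) (F q.*2 + F q.*2.+1).
Proof.
elim: m => [|m IH]; first by rewrite !big_geq.
by rewrite doubleS !big_nat_recr //= IH addnA.
Qed.

Lemma degE n r (v : 'I_n) : v < (n./2).*2 -> deg (Gc n r) v = n./2.
Proof.
move=> vm; set m := n./2.
have mn : m.*2 <= n by rewrite /m -{2}(odd_double_half n); lia.
rewrite /deg -sum1dep_card big_mkcond /=.
rewrite (eq_bigr (fun i : 'I_n => (E m r v i : nat))); last by move=> i _; rewrite /Gc; case: (E _ _ _ _).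
rewrite -(big_mkord xpredT (fun i => (E m r v i : nat))) (big_cat_nat (leq0n m.*2) mn) /=.
have Z : \sum_(m.*2 <= i < n) (E m r v i : nat) = 0.
  rewrite big_nat_cond big1 // => i /andP [/andP [hi _] _]; rewrite /E.
  by rewrite (ltnNge i) hi andbF.
rewrite Z addn0.
rewrite sum_pairs big_nat_cond.
rewrite (eq_bigr (fun _ => 1)); last first.
  move=> q /andP [/andP [_ hq] _].
  rewrite -(odd_double_half v); apply: pair_val => //.
  by move: vm; rewrite -{1}(odd_double_half v); lia.
by rewrite -big_nat_cond sum_nat_const_nat subn0 muln1.
Qed.

Lemma deg_sum n r : (n./2).*2 * (n./2 * (n.-1 - n./2)) <=
  \sum_(v : 'I_n) deg (Gc n r) v * (n.-1 - deg (Gc n r) v).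
Proof.
set m := n./2.
have mn : m.*2 <= n by rewrite /m -{2}(odd_double_half n); lia.
apply: leq_trans (_ : \sum_(v : 'I_n) (if v < m.*2 then m * (n.-1 - m) else 0) <= _); last first.
  by apply: leq_sum => v _; case: ifP => h //; rewrite degE.
rewrite -(big_mkord xpredT (fun i => if i < m.*2 then m * (n.-1 - m) else 0)).
rewrite (big_cat_nat (leq0n m.*2) mn) /=.
apply: leq_trans (leq_addr _ _).
rewrite (@eq_big_nat _ _ _ 0 m.*2 _ (fun _ => m * (n.-1 - m))).
  by rewrite sum_nat_const_nat subn0.
by move=> i /andP [_ ->].
Qed.

Lemma k3_G0 n : k3f (Gc n 0) = 0.
Proof.
apply: (@k3_side _ _ (fun x => odd x)) => x y xy /= oxy.
by rewrite /Gc /E oxy eqxx /Hc !ltn0 !andbF.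
Qed.

Lemma k3_Gm n : k3f (gcompl (Gc n n./2)) <= n * n.
Proof.
set m := n./2.
have mn : n <= m.*2.+1 by rewrite /m -{1}(odd_double_half n); case: (odd n); lia.
set S := [set v : 'I_n | m.*2 <= v].
have cS : #|S| <= 1.
  apply/card_le1_eqP => x y; rewrite !inE => hx hy; apply: val_inj => /=.
  have := ltn_ord x; have := ltn_ord y; lia.
have := @k3_local n (gcompl (Gc n m))
   (fun x y => gcompl (Gc n m) x y && (x < m.*2) && (y < m.*2)) S.
have -> : k3f (fun x y : 'I_n => gcompl (Gc n m) x y && (x < m.*2) && (y < m.*2)) = 0.
  apply: (@k3_side _ _ (fun x => odd x)) => x y xy /= oxy.
  rewrite /gcompl xy /Gc /E /= oxy eqxx.
  case hx: (val x < m.*2); case hy: (val y < m.*2) => //=.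
  have hxy : val x != val y by [].
  have ex := odd_double_half x; have ey := odd_double_half y.
  rewrite oxy in ex.
  have p1 : x./2 != y./2 by apply: contra hxy => /eqP h; apply/eqP; transitivity (odd y + x./2.*2); [by rewrite ex | by rewrite h ey].
  have p2 : x./2 < m by rewrite ltn_half_double hx.
  have p3 : y./2 < m by rewrite ltn_half_double hy.
  by rewrite /Hc p1 p2 p3 xy.
move=> /(_ _) H.
apply: leq_trans (H _) _.
  by move=> x y; rewrite !inE -!ltnNge => -> ->; rewrite !andbT.
rewrite add0n; apply: leq_trans (leq_mul cS (leqnn _)) _; lia.
Qed.

Lemma k3_step n r : k3f (Gc n r.+1) <= k3f (Gc n r) + 2 * (n * n).
Proof.
set S := [set v : 'I_n | v./2 == r].
have c1 k : #|[set v : 'I_n | val v == k]| <= 1.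
  by apply/card_le1_eqP => x y; rewrite !inE => /eqP hx /eqP hy; apply: val_inj; rewrite /= hx hy.
have cS : #|S| <= 2.
  apply: leq_trans (_ : #|[set v : 'I_n | val v == r.*2] :|: [set v : 'I_n | val v == r.*2.+1]| <= 2).
    apply/subset_leq_card/subsetP => v; rewrite !inE => /eqP hv.
    have := odd_double_half v; rewrite hv; case: (odd v) => /= <-.
      by rewrite eqxx orbT.
    by rewrite add0n eqxx.
  apply: leq_trans (leq_card_setU _ _).1 _.
  by apply: leq_trans (leq_add (c1 _) (c1 _)) _.
have := @k3_local n (Gc n r.+1) (Gc n r) S.
move=> /(_ _) H; apply: leq_trans (H _) _.
  move=> x y; rewrite !inE => hx hy.
  by rewrite /Gc /E /Hc !ltnS !(leq_eqVlt (_./2)) (negbTE hx) (negbTE hy).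
by rewrite leq_add2l leq_mul2r cS orbT.
Qed.

Lemma binC n : 'C(n, 3) * 6 = n * (n.-1 * n.-2).
Proof.
have := bin_ffact n 3; rewrite !ffactnS ffactn0 muln1 => ->.
by case: n => [|[|[|n]]] //=; rewrite !subSS ?subn0 /=; lia.
Qed.

Lemma amgm d t : d * t * 4 <= (d + t) * (d + t).
Proof.
case: (leqP d t) => h; [rewrite -(subnKC h) | rewrite -(subnKC (ltnW h))];
  move: (_ - _) => s; nia.
Qed.

Lemma P1 n (e : rel 'I_n) : simple_graph e ->
  'C(n, 3) <= 4 * (k3f e + k3f (gcompl e)) + 4 * (n * n).
Proof.
move=> se; have G := goodman se.
have B : \sum_(v : 'I_n) deg e v * (n.-1 - deg e v) * 4 <= n * (n.-1 * n.-1).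
  apply: leq_trans (_ : \sum_(v : 'I_n) n.-1 * n.-1 <= _).
    apply: leq_sum => v _; move: (deg e v) (n.-1) => d k.
    case: (leqP d k) => h.
      rewrite -{2 3}(subnKC h); move: (k - d) => t; exact: amgm.
    rewrite (_ : k - d = 0) ?muln0 ?mul0n //; apply/eqP; rewrite subn_eq0 ltnW //.
  by rewrite sum_nat_const card_ord.
rewrite -big_distrl /= in B.
have C6 := binC n.
move: G B C6; move: (k3f e + k3f (gcompl e)) (\sum_(v : 'I_n) _) ('C(n, 3)) => K s c.
have h1 : n.-1 <= n.-2 + 1 by lia.
have h2 : n.-1 <= n by lia.
move: h1 h2; move: n.-1 n.-2 => n1 n2 h1 h2 G B C6.
have h3 : n * n1 * n1 <= n * n1 * n2 + n * n1 by nia.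
nia.
Qed.

Lemma P2 n r : 4 * (k3f (Gc n r) + k3f (gcompl (Gc n r))) <= 'C(n, 3) + 4 * (n * n).
Proof.
have G := goodman (Gc_simple n r).
have D := deg_sum n r.
have C6 := binC n.
move: G D C6; move: (k3f (Gc n r) + k3f (gcompl (Gc n r))) (\sum_(v : 'I_n) _) ('C(n, 3)) => K s c.
have := odd_double_half n; move: (n./2) => m.
case: (odd n) => /= <-; case: m => [|k] /=; rewrite ?doubleS /= ?add1n /= -?addnn ?addnS ?addSn /= ?subSS ?subn0.
- lia.
- nia.
- lia.
- nia.
Qed.

Lemma Cbig n : 4 <= n -> n * (n * n) <= 24 * 'C(n, 3).
Proof.
have C6 := binC n; case: n C6 => [|[|[|[|k]]]] //= C6 _.
nia.
Qed.

Lemma Cpos n : 4 <= n -> 0 < 'C(n, 3).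
Proof. by move=> h; rewrite bin_gt0; apply: leq_trans h. Qed.

End Comb.
Import Comb.
Unset Implicit Arguments. Set Strict Implicit.

Local Open Scope ring_scope.
Local Open Scope classical_set_scope.

Section An.
Variable R : realType.

Lemma cvg_bound (u : nat -> R) L K :
  (forall n, (4 <= n)%N -> `|u n - L| <= K / n%:R) -> u @ \oo --> L.
Proof.
move=> H; apply/cvgrPdist_le => eps e0.
near=> n.
have h4 : (4 <= n)%N by near: n; exact: nbhs_infty_ge.
have hK : K / eps <= n%:R by near: n; exact: nbhs_infty_ger.
have n0 : (0 : R) < n%:R by rewrite ltr0n; apply: leq_trans h4.
rewrite distrC; apply: le_trans (H n h4) _.
by rewrite ler_pdivrMr // mulrC -ler_pdivrMr.
Unshelve. all: by end_near.
Qed.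

Lemma ivt (f : nat -> R) t d m : 0 <= d -> f 0%N <= t ->
  (forall r, (r < m)%N -> f r.+1 <= f r + d) -> t - d <= f m ->
  exists r, `|f r - t| <= d.
Proof.
move=> d0 f0 step fm.
have aux k : (k <= m)%N -> (exists r, `|f r - t| <= d) \/ f k < t - d.
  elim: k => [|k IH] hk.
    case: (ltP (f 0%N) (t - d)) => h; [by right | left; exists 0%N].
    by rewrite ler_norml; apply/andP; split; lra.
  case: (IH (ltnW hk)) => [l|h]; first by left.
  have s := step k hk.
  case: (ltP (f k.+1) (t - d)) => h2; [by right | left; exists k.+1].
  by rewrite ler_norml; apply/andP; split; lra.
by case: (aux m (leqnn m)) => // h; move: fm; rewrite leNgt h.
Qed.


Lemma dens_E n (e : rel 'I_n) : k3_dens R e = (k3f e)%:R / ('C(n, 3))%:R.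
Proof. by rewrite /k3_dens k3E. Qed.

Lemma bound_div (a c n : R) (K : R) : 0 < c -> 0 < n ->
  `|a| <= K * n ^+ 2 -> n ^+ 3 <= 24 * c -> `|a / c| <= (24 * K) / n.
Proof.
move=> c0 n0 ha hc.
rewrite normrM normfV (gtr0_norm c0) ler_pdivrMr // mulrAC ler_pdivlMr //.
apply: le_trans (_ : K * n ^+ 2 * n <= _).
  by rewrite ler_wpM2r // ltW.
have K0 : 0 <= K.
  have : 0 <= K * n ^+ 2 by apply: le_trans ha.
  by rewrite pmulr_lge0 // exprn_gt0.
have h := ler_wpM2l K0 hc; rewrite exprSr mulrA in h.
by apply: le_trans h _; rewrite mulrA (mulrC K).
Qed.

Lemma natsq n : ((n * n)%N%:R : R) = n%:R ^+ 2.
Proof. by rewrite natrM expr2. Qed.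

Lemma ex_r (y : R) n : 0 <= y <= 1/4 ->
  exists r, `|(k3f (Gc n r))%:R - y * ('C(n,3))%:R| <= 2 * (n%:R : R) ^+ 2.
Proof.
case/andP => y0 y1.
have c0 : (0 : R) <= ('C(n,3))%:R by [].
apply: (@ivt _ _ _ n./2).
- by rewrite mulr_ge0 // exprn_ge0.
- by rewrite k3_G0 mulr_ge0.
- move=> r _; have := k3_step n r; rewrite -(ler_nat R) natrD natrM natsq.
  by [].
- have h1 := P1 (Gc_simple n n./2); have h2 := k3_Gm n.
  have h3 : ('C(n, 3) <= 4 * k3f (Gc n n./2) + 8 * (n * n))%N by lia.
  move: h3; rewrite -(ler_nat R) natrD !natrM -expr2 => h3.
  nra.
Qed.

Lemma realised_UB (x : R) : 0 <= x <= 1/4 -> realised x (1/4 - x).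
Proof.
case/andP => x0 x1.
have hy : 0 <= 1/4 - x <= 1/4 by apply/andP; split; lra.
pose r n := xchoose (@ex_r (1/4 - x) n hy).
have hr n : `|(k3f (Gc n (r n)))%:R - (1/4 - x) * ('C(n,3))%:R| <= 2 * (n%:R : R) ^+ 2.
  exact: (xchooseP (@ex_r (1/4 - x) n hy)).
have key n : (4 <= n)%N ->
   [/\ 0 < ('C(n,3))%:R :> R, 0 < n%:R :> R, (n%:R : R) ^+ 3 <= 24 * ('C(n,3))%:R,
       `|(k3f (Gc n (r n)))%:R - (1/4 - x) * ('C(n,3))%:R| <= 2 * (n%:R : R) ^+ 2 &
       `|(k3f (gcompl (Gc n (r n))))%:R - x * ('C(n,3))%:R| <= 3 * (n%:R : R) ^+ 2].
  move=> n4; split.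
  - by rewrite ltr0n Cpos.
  - by rewrite ltr0n; apply: leq_trans n4.
  - by have := Cbig n4; rewrite -(ler_nat R) !natrM; rewrite (_ : n%:R ^+ 3 = n%:R * (n%:R * n%:R)) // -expr2 -exprS.
  - exact: hr.
  have h1 := P1 (Gc_simple n (r n)); have h2 := P2 n (r n).
  move: h1 h2; rewrite -!(ler_nat R) !natrD !natrM -!expr2 => h1 h2.
  have := hr n; rewrite !ler_norml => /andP [h3 h4].
  by apply/andP; split; lra.
exists (fun n => Gc n (r n)); split; first by move=> n; exact: Gc_simple.
split.
- apply: (@cvg_bound _ _ (24 * 3)) => n n4.
  have [c0 n0 cb _ hb] := key n n4.
  rewrite dens_E.
  have -> : (k3f (gcompl (Gc n (r n))))%:R / ('C(n,3))%:R - x =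
            ((k3f (gcompl (Gc n (r n))))%:R - x * ('C(n,3))%:R) / ('C(n,3))%:R.
    by field; rewrite gt_eqF.
  exact: bound_div.
- apply: (@cvg_bound _ _ (24 * 2)) => n n4.
  have [c0 n0 cb ha _] := key n n4.
  rewrite dens_E.
  have -> : (k3f (Gc n (r n)))%:R / ('C(n,3))%:R - (1/4 - x) =
            ((k3f (Gc n (r n)))%:R - (1/4 - x) * ('C(n,3))%:R) / ('C(n,3))%:R.
    by field; rewrite gt_eqF.
  exact: bound_div.
Qed.

Lemma lowb n (e : rel 'I_n) : simple_graph e -> (4 <= n)%N ->
  1/4 - 24 / n%:R <= k3_dens R (gcompl e) + k3_dens R e.
Proof.
move=> se n4; rewrite !dens_E -mulrDl.
have c0 : (0 : R) < ('C(n,3))%:R by rewrite ltr0n Cpos.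
have n0 : (0 : R) < n%:R by rewrite ltr0n; apply: leq_trans n4.
have cb : (n%:R : R) ^+ 2 * n%:R <= 24 * ('C(n,3))%:R.
  by have := Cbig n4; rewrite -(ler_nat R) !natrM -expr2 mulrC.
have h1 := P1 se; move: h1; rewrite -!(ler_nat R) !natrD !natrM -expr2 => h1.
move: c0 n0 cb h1; move: ('C(n,3))%:R (n%:R) => c m c0 n0 cb h1.
move: ((k3f (gcompl e))%:R) ((k3f e)%:R) h1 => b a h1.
have e1 : 1/4 - (m ^+ 2) / c = (c / 4 - m ^+ 2) / c by field; rewrite gt_eqF.
have e2 : (m ^+ 2) / c <= 24 / m.
  by rewrite ler_pdivrMr // mulrAC ler_pdivlMr.
apply: le_trans (_ : 1/4 - (m ^+ 2) / c <= _); first by lra.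
rewrite e1 ler_pM2r ?invr_gt0 //; lra.
Qed.

Lemma realised_LB (x y : R) : realised x y -> 1/4 - x <= y.
Proof.
case=> G [sG [hx hy]].
have hs := cvgD hx hy; move: hs => /(_ _) hs.
rewrite leNgt; apply/negP => H.
have lt : x + y < ((x + y) + 1/4) / 2 by lra.
have F : \forall n \near \oo, False.
  near=> n.
  have h4 : (4 <= n)%N by near: n; exact: nbhs_infty_ge.
  have hn : 48 / (1/4 - (x + y)) <= n%:R by near: n; exact: nbhs_infty_ger.
  have hl : k3_dens R (gcompl (G n)) + k3_dens R (G n) < ((x + y) + 1/4) / 2.
    by near: n; apply: filterS (cvgr_lt _ hs _ lt) => n.
  have := @lowb n (G n) (sG n) h4.
  have n0 : (0 : R) < n%:R by rewrite ltr0n; apply: leq_trans h4.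
  have : 24 / n%:R <= (1/4 - (x + y)) / 2.
    rewrite ler_pdivrMr // mulrAC ler_pdivlMr; last lra.
    rewrite ler_pdivrMr in hn; last lra.
    lra.
  lra.
case: F => N _ /(_ N (leqnn N)) //.
Unshelve. all: by end_near.
Qed.

End An.

Theorem lemma2p3 (R : realType) (x : R) :
  0 <= x <= 1 / 4 ->
  [set y | @Omega33 R (x, y)] !=set0 /\ c33 x = 1 / 4 - x.
Proof.
move=> hx.
have mem : [set y | @Omega33 R (x, y)] (1/4 - x) by exact: realised_UB.
have lb : lbound [set y | @Omega33 R (x, y)] (1/4 - x).
  by move=> y; exact: realised_LB.
split; first by exists (1/4 - x).
apply/eqP; rewrite eq_le; apply/andP; split.
  by apply: (ge_inf (ex_intro _ (1/4 - x) lb)).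
by apply: lb_le_inf => //; exists (1/4 - x).
Qed.
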